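(* Let $(E,\mu)$, $(F,\nu)$, $(H,\omega)$ be fuzzy Riesz spaces with $F$ fuzzy Dedekind complete, let $Q:E\rightarrow H$ be a fuzzy lattice homomorphism and $S:H\rightarrow F$ a fuzzy positive linear operator. Then every fuzzy positive linear operator $T:E\rightarrow F$ with $T\le S\circ Q$ admits a factorization $T=S_1\circ Q$, where $S_1:H\rightarrow F$ is linear and $0\le S_1\le S$.
   Context: A fuzzy order on a real vector space $E$ is a map $\mu:E\times E\to[0,1]$ with $\mu(x,x)=1$; $\mu(x,y)+\mu(y,x)>1$ implies $x=y$; and $\mu(x,z)\ge\sup_{y}\min(\mu(x,y),\mu(y,z))$. Write $x\le y$ for $\mu(x,y)>\frac12$; upper bounds, suprema and infima are taken with respect to this relation. $(E,\mu)$ is a fuzzy ordered linear space if $\mu(x_1,x_2)>\frac12$ implies $\mu(x_1,x_2)\le\mu(x_1+x,x_2+x)$ for all $x$ and $\mu(x_1,x_2)\le\mu(\alpha x_1,\alpha x_2)$ for all $\alpha>0$; it is a fuzzy Riesz space if $x\vee y=\sup\{x,y\}$, $x\wedge y=\inf\{x,y\}$ exist for all $x,y$; fuzzy Dedekind complete if every nonempty subset bounded above has a supremum. A linear operator $R$ is fuzzy positive ($0\le R$) if $0\le x$ implies $0\le Rx$; for linear operators $R_1,R_2$ between the same spaces, $R_1\le R_2$ means $R_2-R_1$ is fuzzy positive. A fuzzy lattice homomorphism is a linear map with $Q(x\vee y)=Qx\vee Qy$. *)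

(* Defs.v *)
From HB Require Import structures.
From mathcomp Require Import all_boot all_order all_algebra.
From mathcomp Require Import reals.
Set Implicit Arguments. Unset Strict Implicit. Unset Printing Implicit Defensive.
Import Order.TTheory GRing.Theory Num.Theory.
Local Open Scope ring_scope.

Section FuzzyDefs.
Variable R : realType.

(* Fuzzy order mu : E x E -> [0,1].  The transitivity condition
   mu(x,z) >= sup_y min(mu(x,y), mu(y,z)) is written out pointwise in y. *)
Definition fuzzy_order (E : Type) (mu : E -> E -> R) : Prop :=
  [/\ (forall x y, 0 <= mu x y <= 1),
      (forall x, mu x x = 1),
      (forall x y, mu x y + mu y x > 1 -> x = y) &
      (forall x y z, Num.min (mu x y) (mu y z) <= mu x z)].

Definition fle (E : Type) (mu : E -> E -> R) (x y : E) : Prop := 1 / 2 < mu x y.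

Definition fuzzy_ordered_linear (E : lmodType R) (mu : E -> E -> R) : Prop :=
  [/\ fuzzy_order mu,
      (forall x1 x2 x, fle mu x1 x2 -> mu x1 x2 <= mu (x1 + x) (x2 + x)) &
      (forall x1 x2 (a : R), fle mu x1 x2 -> 0 < a -> mu x1 x2 <= mu (a *: x1) (a *: x2))].

Definition is_ub (E : Type) (mu : E -> E -> R) (A : E -> Prop) (u : E) : Prop :=
  forall a, A a -> fle mu a u.
Definition is_lb (E : Type) (mu : E -> E -> R) (A : E -> Prop) (l : E) : Prop :=
  forall a, A a -> fle mu l a.
Definition is_sup (E : Type) (mu : E -> E -> R) (A : E -> Prop) (s : E) : Prop :=
  is_ub mu A s /\ forall u, is_ub mu A u -> fle mu s u.
Definition is_inf (E : Type) (mu : E -> E -> R) (A : E -> Prop) (i : E) : Prop :=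
  is_lb mu A i /\ forall l, is_lb mu A l -> fle mu l i.

Definition pair_set (E : Type) (x y : E) : E -> Prop := fun z => z = x \/ z = y.

Definition fuzzy_riesz (E : lmodType R) (mu : E -> E -> R) : Prop :=
  [/\ fuzzy_ordered_linear mu,
      (forall x y : E, exists s, is_sup mu (pair_set x y) s) &
      (forall x y : E, exists i, is_inf mu (pair_set x y) i)].

Definition fuzzy_dedekind_complete (E : Type) (mu : E -> E -> R) : Prop :=
  forall A : E -> Prop, (exists a, A a) -> (exists u, is_ub mu A u) ->
    exists s, is_sup mu A s.

Definition fpos (E F : lmodType R) (mu : E -> E -> R) (nu : F -> F -> R)
  (T : E -> F) : Prop :=
  forall x, fle mu 0 x -> fle nu 0 (T x).

Definition fop_le (E F : lmodType R) (mu : E -> E -> R) (nu : F -> F -> R)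
  (T1 T2 : E -> F) : Prop :=
  fpos mu nu (fun x => T2 x - T1 x).

(* Q(x v y) = Qx v Qy : Q maps the supremum of {x,y} to the supremum of {Qx,Qy}
   (suprema are unique by antisymmetry of the fuzzy order). *)
Definition fuzzy_lattice_hom (E H : lmodType R) (mu : E -> E -> R)
  (om : H -> H -> R) (Q : E -> H) : Prop :=
  forall x y s, is_sup mu (pair_set x y) s ->
    is_sup om (pair_set (Q x) (Q y)) (Q s).

End FuzzyDefs.

(* Main.v *)
Require Import Defs.
From HB Require Import structures.
From mathcomp Require Import all_boot all_order all_algebra.
From mathcomp Require Import reals.
From mathcomp Require Import boolp classical_sets.
From mathcomp Require Import lra.
Import Order.TTheory GRing.Theory Num.Theory.
Local Open Scope ring_scope.

Section Ord.
Variables (R : realType) (E : lmodType R) (mu : E -> E -> R).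
Hypothesis Hmu : fuzzy_ordered_linear mu.
Local Notation le := (fle mu).

Lemma le_refl x : le x x.
Proof. case: Hmu => -[_ h1 _ _] _ _; rewrite /fle h1; lra. Qed.

Lemma le_trans x y z : le x y -> le y z -> le x z.
Proof.
case: Hmu => -[_ _ _ ht] _ _; rewrite /fle => h1 h2.
apply: (lt_le_trans _ (ht x y z)); rewrite lt_min h1 h2 //.
Qed.

Lemma le_anti x y : le x y -> le y x -> x = y.
Proof. case: Hmu => -[_ _ ha _] _ _; rewrite /fle => h1 h2; apply: ha; lra. Qed.

Lemma le_add z {x y} : le x y -> le (x + z) (y + z).
Proof. case: Hmu => _ h _; rewrite /fle => h1; exact: (lt_le_trans h1 (h _ _ z h1)). Qed.

Lemma le_scale {a : R} {x y} : 0 < a -> le x y -> le (a *: x) (a *: y).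
Proof. case: Hmu => _ _ h; rewrite /fle => ha h1; exact: (lt_le_trans h1 (h _ _ a h1 ha)). Qed.

Lemma le_scale0 {a : R} {x y} : 0 <= a -> le x y -> le (a *: x) (a *: y).
Proof.
rewrite le_eqVlt => /orP[/eqP <-|ha] h; last exact: le_scale.
rewrite !scale0r; exact: le_refl.
Qed.

Lemma le_subP x y : le x y <-> le 0 (y - x).
Proof.
split=> h.
  by rewrite -(subrr x); exact: le_add.
by have := le_add x h; rewrite add0r subrK.
Qed.

Lemma le_addd a b c d : le a b -> le c d -> le (a + c) (b + d).
Proof.
move=> h1 h2; apply: (le_trans _ (b + c)); first exact: le_add.
by rewrite ![b + _]addrC; exact: le_add.
Qed.

Lemma le_opp x y : le x y -> le (- y) (- x).
Proof.
move=> h; have := le_add (- x - y) h.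
by rewrite addrA subrr add0r addrCA subrr addr0.
Qed.

Lemma le_shift a b c : le (a + b) c -> le a (c - b).
Proof. by move=> h; have := le_add (- b) h; rewrite addrK. Qed.

Lemma le_shift' a b c : le a (c - b) -> le (a + b) c.
Proof. by move=> h; have := le_add b h; rewrite subrK. Qed.

Lemma sup_unique A s s' : is_sup mu A s -> is_sup mu A s' -> s = s'.
Proof. move=> [u1 l1] [u2 l2]; apply: le_anti; [exact: l1|exact: l2]. Qed.

Lemma sup_scale x y s (t : R) : is_sup mu (pair_set x y) s -> 0 < t ->
  is_sup mu (pair_set (t *: x) (t *: y)) (t *: s).
Proof.
move=> [ub lst] t0; split.
  by move=> z [->|->]; apply: le_scale => //; apply: ub; [left|right].
move=> u hu.
have tV : 0 < t^-1 by rewrite invr_gt0.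
have : le s (t^-1 *: u).
  apply: lst => z [->|->].
    have := le_scale tV (hu _ (or_introl erefl)).
    by rewrite scalerA mulVf ?gt_eqF // scale1r.
  have := le_scale tV (hu _ (or_intror erefl)).
  by rewrite scalerA mulVf ?gt_eqF // scale1r.
move=> /(le_scale t0); by rewrite scalerA mulfV ?gt_eqF // scale1r.
Qed.

End Ord.
Arguments le_refl {R E mu} Hmu x.
Arguments le_trans {R E mu} Hmu {x} y {z}.
Arguments le_anti {R E mu} Hmu {x y}.
Arguments le_add {R E mu} Hmu z {x y}.
Arguments le_scale {R E mu} Hmu {a x y}.
Arguments le_scale0 {R E mu} Hmu {a x y}.
Arguments le_subP {R E mu} Hmu {x y}.
Arguments le_addd {R E mu} Hmu {a b c d}.
Arguments le_opp {R E mu} Hmu {x y}.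
Arguments le_shift {R E mu} Hmu {a b c}.
Arguments le_shift' {R E mu} Hmu {a b c}.
Arguments sup_unique {R E mu} Hmu {A s s'}.
Arguments sup_scale {R E mu} Hmu {x y s t}.

Lemma fpos_mono (R : realType) (E F : lmodType R) (mu : E -> E -> R) (nu : F -> F -> R)
  (Hmu : fuzzy_ordered_linear mu) (Hnu : fuzzy_ordered_linear nu)
  (f : {linear E -> F}) : fpos mu nu f -> forall x y, fle mu x y -> fle nu (f x) (f y).
Proof.
move=> fp x y /(le_subP Hmu) /fp h; apply/(le_subP Hnu); by rewrite -linearB.
Qed.

Section HBext.
Local Open Scope classical_set_scope.
Variables (R : realType) (H F : lmodType R) (nu : F -> F -> R).
Hypothesis Hnu : fuzzy_ordered_linear nu.
Hypothesis Dnu : fuzzy_dedekind_complete nu.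
Local Notation le := (fle nu).
Variable p : H -> F.
Hypothesis psub : forall x y, le (p (x + y)) (p x + p y).
Hypothesis phom : forall (t : R) x, 0 < t -> p (t *: x) = t *: p x.
Variable G0 : set (H * F).

Definition Pg (G : set (H * F)) : Prop :=
  [/\ (forall h1 y1 h2 y2, G (h1, y1) -> G (h2, y2) -> G (h1 + h2, y1 + y2)),
      (forall (a : R) h y, G (h, y) -> G (a *: h, a *: y)),
      G0 `<=` G &
      (forall h y, G (h, y) -> le y (p h))].

Hypothesis PG0 : Pg G0.
Hypothesis G00 : G0 (0, 0).

Lemma le_subl a b c : le a (b + c) -> le (a - b) c.
Proof. by move=> /(le_add Hnu (- b)); rewrite addrAC subrr add0r. Qed.

Lemma le_swap a b e : le (a - b) e -> le (a - e) b.
Proof. by move=> /(le_add Hnu (b - e)); rewrite addrA subrK [e + _]addrC subrK. Qed.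

Lemma p0 : p 0 = 0.
Proof.
have := @phom 2 0 (ltr0Sn R 1); rewrite scaler0 scaler_nat mulr2n => h.
by apply: (@addrI _ (p 0)); rewrite addr0 -h.
Qed.

Lemma functional G : Pg G -> forall h y1 y2, G (h, y1) -> G (h, y2) -> y1 = y2.
Proof.
case=> Gb Gc _ Ge h y1 y2 g1 g2.
have g3 : G (0, y1 - y2).
  by have := Gb _ _ _ _ g1 (Gc (-1) _ _ g2); rewrite !scaleN1r subrr.
have g4 : G (0, y2 - y1).
  by have := Gb _ _ _ _ g2 (Gc (-1) _ _ g1); rewrite !scaleN1r subrr.
have l1 := Ge _ _ g3; have l2 := Ge _ _ g4; rewrite p0 in l1 l2.
apply/eqP; rewrite -subr_eq0; apply/eqP; apply: (le_anti Hnu) => //.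
by move: (le_opp Hnu l2); rewrite oppr0 opprB.
Qed.

Lemma extend G h : Pg G -> (forall y, ~ G (h, y)) ->
  exists G', Pg G' /\ G `<` G'.
Proof.
move=> PG nh; have [Gb Gc G0G Ge] := PG.
have G00' : G (0, 0) by apply: G0G.
pose Aset := fun z => exists w y, G (w, y) /\ z = y - p (w - h).
have [c [cub clst]] : exists c, is_sup nu Aset c.
  apply: Dnu; first by exists (0 - p (0 - h)), 0, 0.
  exists (p h) => _ [w [y [gy ->]]]; apply: le_subl.
  apply: (le_trans Hnu _ (Ge _ _ gy)).
  by have := psub (w - h) h; rewrite subrK.
have cle w y : G (w, y) -> le c (p (w + h) - y).
  move=> gy; apply: clst => _ [w' [y' [gy' ->]]].
  apply: (le_shift Hnu); rewrite addrAC; apply: le_subl.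
  apply: (le_trans Hnu _ (Ge _ _ (Gb _ _ _ _ gy' gy))).
  by have := psub (w' - h) (w + h); rewrite addrACA addNr addr0.
have clow w y : G (w, y) -> le (y - p (w - h)) c.
  by move=> gy; apply: cub; exists w, y.
pose G' := fun q => exists v y (t : R), G (v, y) /\ q = (v + t *: h, y + t *: c).
exists G'; split; last first.
  split; first by move=> [v y] gy; exists v, y, 0; rewrite !scale0r !addr0.
  move=> /(_ (h, c)) hc; apply: (nh c); apply: hc.
  by exists 0, 0, 1; rewrite !scale1r !add0r.
split.
- move=> h1 y1 h2 y2 [v1 [z1 [t1 [g1 [-> ->]]]]] [v2 [z2 [t2 [g2 [-> ->]]]]].
  exists (v1 + v2), (z1 + z2), (t1 + t2); split; first exact: Gb.
  by rewrite !scalerDl; congr (_, _); rewrite addrACA.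
- move=> a h1 y1 [v [z [t [g [-> ->]]]]].
  exists (a *: v), (a *: z), (a * t); split; first exact: Gc.
  by rewrite !scalerDr !scalerA.
- by move=> [v y] /G0G gy; exists v, y, 0; rewrite !scale0r !addr0.
- move=> h1 y1 [v [y [t [g [-> ->]]]]].
  case: (ltgtP t 0) => [tn|tp|->]; last by rewrite !scale0r !addr0; exact: Ge.
  + pose s := - t; have sp : 0 < s by rewrite /s oppr_gt0.
    have gs := Gc s^-1 _ _ g.
    have := le_scale Hnu sp (clow _ _ gs).
    rewrite scalerBr -phom // scalerBr !scalerA mulfV ?gt_eqF // !scale1r.
    rewrite /s !scaleNr !opprK.
    by move=> /le_swap; rewrite opprK.
  + have gs := Gc t^-1 _ _ g.
    have := le_scale Hnu tp (cle _ _ gs).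
    rewrite scalerBr -phom // scalerDr !scalerA mulfV ?gt_eqF // !scale1r.


    by move=> /(le_shift' Hnu); rewrite addrC.
Qed.

Lemma chain_ub (Fam : set (set (H * F))) :
  Fam `<=` (fun A => Pg (A `|` G0)) -> total_on Fam subset ->
  Pg ((\bigcup_(X in Fam) X) `|` G0).
Proof.
move=> FP tot; set U := _ `|` G0.
have WX X : Fam X -> (X `|` G0) `<=` U.
  by move=> FX q [Xq|Gq]; [left; exists X|right].
have key q1 q2 : U q1 -> U q2 -> exists W, [/\ Pg W, W `<=` U, W q1 & W q2].
  case=> [[X1 F1 X1q]|G1]; case=> [[X2 F2 X2q]|G2].
  - have [s12|s21] := tot _ _ F1 F2.
      by exists (X2 `|` G0); split; [exact: FP|exact: WX|left; exact: s12|left].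
    by exists (X1 `|` G0); split; [exact: FP|exact: WX|left|left; exact: s21].
  - by exists (X1 `|` G0); split; [exact: FP|exact: WX|left|right].
  - by exists (X2 `|` G0); split; [exact: FP|exact: WX|right|left].
  - by exists G0; split => //; move=> q Gq; right.
split.
- move=> h1 y1 h2 y2 u1 u2; have [W [[Wb _ _ _] WU w1 w2]] := key _ _ u1 u2.
  exact/WU/Wb.
- move=> a h y u; have [W [[_ Wc _ _] WU w1 _]] := key _ _ u u.
  exact/WU/Wc.
- by move=> q Gq; right.
- move=> h y u; have [W [[_ _ _ We] WU w1 _]] := key _ _ u u.
  exact: We.
Qed.

Lemma hb_main : exists f : H -> F, linear f /\
  (forall h y, G0 (h, y) -> f h = y) /\ (forall h, le (f h) (p h)).
Proof.
have [A [PA Amax]] := @Zorn_bigcup (H * F) (fun A => Pg (A `|` G0)) chain_ub.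
set Gm := A `|` G0 in PA.
have tot h : exists y, Gm (h, y).
  apply: contrapT => nex.
  have nh : forall y, ~ Gm (h, y) by move=> y gy; apply: nex; exists y.
  have [G' [PG' [sub nsub]]] := extend _ _ PA nh.
  apply: (Amax G').
    split; first by move=> q Aq; apply: sub; left.
    by move=> GA; apply: nsub => q /GA Aq; left.
  have [_ _ G0G' _] := PG'.
  by rewrite setUidl.
have [f fP] := choice tot.
have [Gb Gc G0G Ge] := PA.
exists f; split; last split.
- move=> a u v; apply: (functional _ PA _ _ _ (fP (a *: u + v))).
  exact: Gb (Gc _ _ _ (fP u)) (fP v).
- by move=> h y g; apply: (functional _ PA _ _ _ (fP h)); apply: G0G.
- by move=> h; apply: Ge.
Qed.

End HBext.

Theorem theorem5p1 (R : realType) (E F H : lmodType R)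
  (mu : E -> E -> R) (nu : F -> F -> R) (om : H -> H -> R)
  (Q : {linear E -> H}) (S : {linear H -> F}) (T : {linear E -> F}) :
  fuzzy_riesz mu -> fuzzy_riesz nu -> fuzzy_riesz om ->
  fuzzy_dedekind_complete nu ->
  fuzzy_lattice_hom mu om Q ->
  fpos om nu S ->
  fpos mu nu T ->
  fop_le mu nu T (fun x => S (Q x)) ->
  exists S1 : {linear H -> F},
    (forall x, T x = S1 (Q x)) /\ fpos om nu S1 /\ fop_le om nu S1 S.
Proof.
move=> [Hmu supE _] [Hnu _ _] [Hom supH _] Dnu Qhom Spos Tpos TSQ.
have [posE posEP] := choice (fun x => supE x 0).
have [posH posHP] := choice (fun x => supH x 0).
have posH_pos h : fle om 0 h -> posH h = h.
  move=> h0; apply: (sup_unique Hom (posHP h)); split.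
    by move=> a [->|->] //; exact: le_refl.
  by move=> u ub; apply: ub; left.
have posH_neg h : fle om 0 h -> posH (- h) = 0.
  move=> h0; apply: (sup_unique Hom (posHP (- h))); split.
    move=> a [->|->]; last exact: le_refl.
    by have := le_opp Hom h0; rewrite oppr0.
  by move=> u ub; apply: ub; right.
pose p h := S (posH h).
have Smono := @fpos_mono _ _ _ _ _ Hom Hnu S Spos.
have Tmono := @fpos_mono _ _ _ _ _ Hmu Hnu T Tpos.
have psub x y : fle nu (p (x + y)) (p x + p y).
  rewrite /p -linearD; apply: Smono; apply: (posHP (x + y)).2 => a [->|->].
    by apply: (le_addd Hom); apply: (posHP _).1; left.
  by rewrite -(addr0 0); apply: (le_addd Hom); apply: (posHP _).1; right.
have phom t x : 0 < t -> p (t *: x) = t *: p x.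
  move=> t0; rewrite /p -linearZ; congr (S _).
  apply: (sup_unique Hom (posHP (t *: x))).
  by have := sup_scale Hom (posHP x) t0; rewrite scaler0.
pose G0 : set (H * F) := fun q => exists x, q = (Q x, T x).
have Tp x : fle nu (T x) (p (Q x)).
  have xp : fle mu x (posE x) by apply: (posEP x).1; left.
  have xp0 : fle mu 0 (posE x) by apply: (posEP x).1; right.
  apply: (le_trans Hnu _ (Tmono _ _ xp)).
  have QE : Q (posE x) = posH (Q x).
    apply: (sup_unique Hom _ (posHP (Q x))).
    by have := Qhom _ _ _ (posEP x); rewrite linear0.
  rewrite /p -QE; apply/(le_subP Hnu); exact: TSQ.
have PG0 : @Pg R H F nu p G0 G0.
  split.
  - by move=> h1 y1 h2 y2 [x1 [-> ->]] [x2 [-> ->]]; exists (x1 + x2); rewrite !linearD.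
  - by move=> a h y [x [-> ->]]; exists (a *: x); rewrite !linearZ.
  - by [].
  - by move=> h y [x [-> ->]]; exact: Tp.
have G00 : G0 (0, 0) by exists 0; rewrite !linear0.
have [f [lin [ext dom]]] := @hb_main R H F nu Hnu Dnu p psub phom G0 PG0 G00.
pose S1 : {linear H -> F} := HB.pack f (GRing.isLinear.Build R H F *:%R f lin).
exists S1; split; last split.
- by move=> x; symmetry; apply: ext; exists x.
- move=> h h0; have := dom (- h); rewrite /p posH_neg // linear0.
  have -> : f (- h) = - f h by exact: (linearN S1 h).
  by move/(le_opp Hnu); rewrite opprK oppr0.
- move=> h h0; have := dom h; rewrite /p posH_pos // => /(le_subP Hnu) H1; exact: H1.
Qed.
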